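(* Let $x\in A^{\mathbb N}$ be an infinite word. If there exists a finite maximal bifix code $X\subset A^+$ of degree $d$ such that $\mathrm{Card}(X\cap F(x))\le d$, then $x$ is ultimately periodic.
   Context: $A$ is a finite alphabet; $F(x)$ is the set of finite factors of $x$. A bifix code is a set of nonempty words none of which is a proper prefix or proper suffix of another; it is maximal if not properly contained in another bifix code of $A^*$. A parse of $w$ with respect to $X$ is a triple $(v,z,u)$ with $w=vzu$, $v$ having no suffix in $X$, $z\in X^*$, $u$ having no prefix in $X$; the degree of $X$ is $\max_{w\in A^*}$ of the number of parses of $w$. An infinite word $a_0a_1\cdots$ is ultimately periodic if for some $n\ge1$, $a_{i+n}=a_i$ for all large $i$. *)

(* Defs.v *)
From mathcomp Require Import all_boot.
Set Implicit Arguments. Unset Strict Implicit. Unset Printing Implicit Defensive.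

Section Words.
Variable A : finType.

Definition bifix_code (Y : seq A -> Prop) : Prop :=
  (forall w, Y w -> w <> [::]) /\
  (forall u v, Y u -> Y v -> u <> v -> ~~ prefix u v /\ ~~ suffix u v).

Definition maximal_bifix_code (X : seq (seq A)) : Prop :=
  bifix_code (fun w => w \in X) /\
  (forall Y : seq A -> Prop, bifix_code Y ->
     (forall w, w \in X -> Y w) -> forall w, Y w -> w \in X).

Definition in_star (X : seq (seq A)) (z : seq A) : Prop :=
  exists ys : seq (seq A), all (fun y => y \in X) ys /\ flatten ys = z.

Definition is_parse (X : seq (seq A)) (w : seq A)
    (t : seq A * seq A * seq A) : Prop :=
  let: (v, z, u) := t in
  [/\ w = v ++ z ++ u,
      (forall s, suffix s v -> s \notin X),
      in_star X z &
      (forall p, prefix p u -> p \notin X)].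

(* X has degree d: d is the maximum over all words w of the number of
   parses of w (the maximum exists and equals d). *)
Definition has_degree (X : seq (seq A)) (d : nat) : Prop :=
  (forall w (P : seq (seq A * seq A * seq A)), uniq P ->
     (forall t, t \in P -> is_parse X w t) -> size P <= d) /\
  (exists w (P : seq (seq A * seq A * seq A)), [/\ uniq P,
     (forall t, t \in P -> is_parse X w t) & size P = d]).

Definition factor (x : nat -> A) (w : seq A) : Prop :=
  exists i, w = mkseq (fun k => x (i + k)) (size w).

(* Card (X \cap F(x)) <= d, where X is the finite set of entries of the list X:
   every duplicate-free list of elements of X that are factors of x has
   length at most d. *)
Definition card_factors_le (X : seq (seq A)) (x : nat -> A) (d : nat) : Prop :=
  forall Y : seq (seq A), uniq Y ->
    (forall w, w \in Y -> (w \in X) /\ factor x w) -> size Y <= d.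

Definition ultimately_periodic (x : nat -> A) : Prop :=
  exists n, 0 < n /\ exists N, forall i, N <= i -> x (i + n) = x i.

End Words.

(* Main.v *)
Require Import Defs.
From mathcomp Require Import all_boot.
From Stdlib Require Import Classical ClassicalEpsilon.

Module Helpers.
Set Implicit Arguments. Unset Strict Implicit. Unset Printing Implicit Defensive.


Section W.
Variable A : finType.

Lemma countE (T : Type) (P : pred T) (r : seq T) : count P r = \sum_(j <- r) (P j : nat).
Proof. by elim: r => [|a r IH]; rewrite ?big_nil ?big_cons //= IH. Qed.

Fixpoint wds (n : nat) : seq (seq A) :=
  if n is m.+1 then flatten [seq [seq a :: w | w <- wds m] | a <- index_enum A] else [:: [::]].

Lemma count_wdsS (P : pred (seq A)) n :
  count P (wds n.+1) = \sum_(a : A) count (fun w => P (a :: w)) (wds n).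
Proof.
rewrite /= count_flatten sumnE !big_map.
by apply: eq_bigr => a _; rewrite count_map.
Qed.

Lemma mem_wds n w : (w \in wds n) = (size w == n).
Proof.
elim: n w => [|n IH] [|a w] //=.
  apply/negP => /flattenP [s /mapP [b _ Es]]; rewrite Es => /mapP [v _] //.
rewrite eqSS; apply/flattenP/idP => [[s /mapP [b _ Es]]|Hs].
    by rewrite Es => /mapP [v Hv [E1 E2]]; rewrite E2 -IH.
  exists [seq a :: w | w <- wds n]; first by apply/mapP; exists a; rewrite ?mem_index_enum.
  by apply/mapP; exists w; rewrite // IH.
Qed.

Lemma count_prefix_wds n y : size y <= n ->
  count (prefix y) (wds n) = #|A| ^ (n - size y).
Proof.
elim: n y => [|n IH] [|b y] //=.
- move=> _; rewrite count_wdsS.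
  transitivity (\sum_(a : A) #|A| ^ n).
    apply: eq_bigr => a _; rewrite -[n in _ ^ n]subn0 -(IH [::]) //; by apply: eq_count => w; case: w.
  by rewrite big_const iter_addn_0 /= subn0 expnS mulnC.
- rewrite ltnS => Hy; rewrite count_wdsS (bigD1 b) //= big1 ?addn0.
    rewrite subSS -IH //; apply: eq_count => w /=; by rewrite eqxx.
  move=> a Hab; apply/eqP; rewrite -leqn0 leqNgt -has_count; apply/hasP => [[w _]] /=.
  by rewrite eq_sym (negbTE Hab).
Qed.

Lemma wds_uniq n : uniq (wds n).
Proof.
elim: n => [|n IH] //=.
elim: (index_enum A) (index_enum_uniq A) => [|a s IHs] //= /andP [Ha Hs].
rewrite cat_uniq IHs // (map_inj_uniq (fun u v (H : a :: u = a :: v) => _)) ?IH ?andbT.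
  apply/hasP => [[w /flattenP [t /mapP [b Hb ->]] /mapP [v _ ->]]] /mapP [v' _ [E _]].
  by move: Ha; rewrite -E Hb.
by move=> u v [].
Qed.

Lemma count_suffix_wds n y : size y <= n ->
  count (suffix y) (wds n) = #|A| ^ (n - size y).
Proof.
move=> Hy.
have Hp : perm_eq (map rev (wds n)) (wds n).
  apply: uniq_perm; first by rewrite (map_inj_uniq (can_inj (@revK _))) wds_uniq.
    exact: wds_uniq.
  move=> w; apply/mapP/idP => [[v Hv ->]|Hw].
    by rewrite mem_wds size_rev -mem_wds.
  by exists (rev w); rewrite ?revK // mem_wds size_rev -mem_wds.
rewrite -(size_rev y) -(count_prefix_wds (y := rev y)) ?size_rev //.
rewrite -((permP Hp) _) count_map; apply: eq_count => w /=.
by rewrite prefix_revLR.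
Qed.

Lemma count_has_disj (T S : eqType) (P : T -> S -> bool) (X : seq T) (s : seq S) :
  uniq X -> (forall w y1 y2, y1 \in X -> y2 \in X -> P y1 w -> P y2 w -> y1 = y2) ->
  count (fun w => has (P^~ w) X) s = \sum_(y <- X) count (P y) s.
Proof.
elim: X => [|y X IH] /=.
  by move=> _ _; rewrite big_nil; apply/eqP; rewrite -leqn0 leqNgt -has_count; apply/hasP=> [[]].
move=> /andP [HyX HX] Hd; rewrite big_cons -IH //; last first.
  by move=> w y1 y2 H1 H2; apply: Hd; rewrite inE ?H1 ?H2 orbT.
have := count_predUI (P y) (fun w => has (P^~ w) X) s.
have -> : count (predI (P y) (fun w => has (P^~ w) X)) s = 0.
  apply/eqP; rewrite -leqn0 leqNgt -has_count; apply/hasP => [[w _]] /= /andP [H1 /hasP [y2 H2 H3]].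
  have H2' : y2 \in y :: X by rewrite inE H2 orbT.
  have E := Hd w y y2 (mem_head _ _) H2' H1 H3.
  by move: HyX; rewrite E H2.
by rewrite addn0 => <-.
Qed.

End W.


Lemma pre_cat (T : eqType) (a p s : seq T) : size a <= size p -> prefix a (p ++ s) -> prefix a p.
Proof.
move=> Ha; rewrite !prefixE take_cat.
by case: ltngtP Ha => // Ea _; rewrite Ea subnn take0 cats0 take_size.
Qed.

Lemma suf_cat (T : eqType) (a p s : seq T) : size a <= size s -> suffix a (p ++ s) -> suffix a s.
Proof.
move=> Ha; rewrite -!prefix_rev rev_cat => H; apply: (pre_cat _ H); by rewrite !size_rev.
Qed.

Section Code.
Variable A : finType.
Variable X : seq (seq A).
Hypothesis Hne : forall w, w \in X -> w <> [::].
Hypothesis Hbif : forall u v, u \in X -> v \in X -> u <> v -> ~~ prefix u v /\ ~~ suffix u v.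
Hypothesis Hmax : forall Y : seq A -> Prop, bifix_code Y -> (forall w, w \in X -> Y w) -> forall w, Y w -> w \in X.

Lemma prefX u v : u \in X -> v \in X -> prefix u v -> u = v.
Proof.
move=> Hu Hv Hp; case: (eqVneq u v) => // /eqP Huv.
by have [/negP] := Hbif Hu Hv Huv.
Qed.

Lemma sufX u v : u \in X -> v \in X -> suffix u v -> u = v.
Proof.
move=> Hu Hv Hp; case: (eqVneq u v) => // /eqP Huv.
by have [_ /negP] := Hbif Hu Hv Huv.
Qed.

Definition L := \max_(y <- X) size y.
Definition N := L.+1.

Lemma sizeX y : y \in X -> size y <= L.
Proof. by move=> Hy; rewrite /L (leq_bigmax_seq (P := xpredT) (F := fun y : seq A => size y) _ Hy). Qed.

Lemma kraft_eq : count (fun w => has (fun y => prefix y w) X) (wds A N) =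
                 count (fun w => has (fun y => suffix y w) X) (wds A N).
Proof.
rewrite (eq_count (a2 := fun w => has (fun y => prefix y w) (undup X))); last first.
  by move=> w; rewrite has_undup.
rewrite [RHS](eq_count (a2 := fun w => has (fun y => suffix y w) (undup X))); last first.
  by move=> w; rewrite has_undup.
rewrite (count_has_disj (P := fun y w => prefix y w)) ?undup_uniq //; last first.
  move=> w y1 y2; rewrite !mem_undup => H1 H2 P1 P2.
  have := size_prefix P1; have := size_prefix P2.
  move: P1 P2; rewrite !prefixE => /eqP E1 /eqP E2.
  case: (leqP (size y1) (size y2)) => [Hl|Hl] _ _.
    by apply: prefX => //; rewrite prefixE -E2 take_takel // E1.
  by apply/esym/prefX => //; rewrite prefixE -E1 take_takel ?E2 // ltnW.
rewrite (count_has_disj (P := fun y w => suffix y w)) ?undup_uniq //; last first.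
  move=> w y1 y2; rewrite !mem_undup => H1 H2 P1 P2.
  move: P1 P2; rewrite -!prefix_rev => P1 P2.
  have := size_prefix P1; have := size_prefix P2.
  move: P1 P2; rewrite !prefixE !size_rev => /eqP E1 /eqP E2.
  case: (leqP (size y1) (size y2)) => [Hl|Hl] _ _.
    apply: sufX => //; rewrite -prefix_rev prefixE size_rev -E2 take_takel // E1 //.
  apply/esym/sufX => //; rewrite -prefix_rev prefixE size_rev -E1 take_takel ?E2 // ?size_rev ltnW //.
rewrite !big_seq; apply: eq_bigr => y; rewrite mem_undup => Hy.
rewrite count_prefix_wds ?count_suffix_wds // /N; apply: leqW; exact: sizeX.
Qed.

Lemma complete w : N <= size w -> has (fun y => prefix y w) X.
Proof.
move=> Hw; apply/negPn/negP => /negP Hn.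
set p := take N w.
have Hp : ~~ has (fun y => prefix y p) X.
  apply/hasP => [[y Hy Hyp]]; apply: Hn; apply/hasP; exists y => //.
  exact: prefix_trans Hyp (prefix_take _ _).
have Hsp : size p = N by rewrite size_takel.
have Hlt : count (fun w => has (fun y => prefix y w) X) (wds A N) < size (wds A N).
  rewrite ltn_neqAle count_size andbT -all_count; apply/allPn; exists p => //.
  by rewrite mem_wds Hsp.
rewrite kraft_eq in Hlt.
have : ~~ all (fun w => has (fun y => suffix y w) X) (wds A N).
  by apply: contraL Hlt; rewrite all_count => /eqP ->; rewrite ltnn.
case/allPn => s; rewrite mem_wds => /eqP Hs Hsn.
set u := p ++ s.
have HuL : L < size u by rewrite size_cat Hsp Hs /N addSn ltnS leq_addr.
have HY : bifix_code (fun v => v \in X \/ v = u).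
  split.
    move=> v [/Hne //|->]; by rewrite /u; case: (p) Hsp.
  have Ha v : v \in X -> ~~ prefix v u /\ ~~ suffix v u.
    move=> Hv; split; apply/negP => H.
      move/negP: Hp; apply; apply/hasP; exists v => //; apply: pre_cat H.
      by rewrite Hsp /N ltnW // ltnS sizeX.
    move/negP: Hsn; apply; apply/hasP; exists v => //; apply: suf_cat H.
    by rewrite Hs /N ltnW // ltnS sizeX.
  have Hb v : v \in X -> ~~ prefix u v /\ ~~ suffix u v.
    move=> Hv; have := sizeX Hv => Hsv.
    split; apply/negP => H.
      by have := size_prefix H; rewrite leqNgt (leq_ltn_trans Hsv HuL).
    by have := size_suffix H; rewrite leqNgt (leq_ltn_trans Hsv HuL).
  move=> a b [Ha'|->] [Hb'|->] Hab //; [exact: Hbif | exact: Ha | exact: Hb].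
have := Hmax HY (fun w H => or_introl H) (or_intror erefl).
by move=> /sizeX; rewrite leqNgt HuL.
Qed.

End Code.


Lemma catIs' (T : eqType) (s1 s2 s3 : seq T) : s1 ++ s3 = s2 ++ s3 -> s1 = s2.
Proof.
move=> E; have Hs : size s1 = size s2.
  by move: (congr1 size E); rewrite !size_cat => /addIn.
by move/eqP: E; rewrite eqseq_cat // => /andP [/eqP].
Qed.

Lemma catsI' (T : eqType) (s s1 s2 : seq T) : s ++ s1 = s ++ s2 -> s1 = s2.
Proof. by elim: s => //= a s IH [] /IH. Qed.

Lemma prefix_comp (T : eqType) (p1 p2 w : seq T) :
  prefix p1 w -> prefix p2 w -> size p1 <= size p2 -> prefix p1 p2.
Proof.
rewrite !prefixE => /eqP E1 /eqP E2 H.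
by rewrite -E2 take_takel // E1.
Qed.

Lemma suffix_comp (T : eqType) (p1 p2 w : seq T) :
  suffix p1 w -> suffix p2 w -> size p1 <= size p2 -> suffix p1 p2.
Proof.
rewrite -!prefix_rev => H1 H2 H; apply: (prefix_comp H1 H2); by rewrite !size_rev.
Qed.

Lemma prefix_rcons_inv (T : eqType) (y s : seq T) a :
  prefix y (rcons s a) -> prefix y s \/ y = rcons s a.
Proof.
rewrite !prefixE -cats1 take_cat; case: ltnP => H /eqP E.
  by left; rewrite E.
case: (size y - size s) E => [|k] /= <-.
  by left; rewrite cats0 take_size.
by right.
Qed.

Section Deg.
Variable A : finType.
Variable X : seq (seq A).
Hypothesis Hne : forall w, w \in X -> w <> [::].
Hypothesis Hbif : forall u v, u \in X -> v \in X -> u <> v -> ~~ prefix u v /\ ~~ suffix u v.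
Hypothesis Hmax : forall Y : seq A -> Prop, bifix_code Y -> (forall w, w \in X -> Y w) -> forall w, Y w -> w \in X.

Definition noX (s : seq A) := ~~ has (fun y => prefix y s) X.
Definition sufs (w : seq A) := [seq drop i w | i <- iota 0 (size w).+1].
Definition U w := [seq s <- sufs w | noX s].

Lemma sufs_uniq w : uniq (sufs w).
Proof.
rewrite map_inj_in_uniq ?iota_uniq // => i j; rewrite !mem_iota !add0n !ltnS => /andP [_ Hi] /andP [_ Hj] E.
have := congr1 size E; rewrite !size_drop => E'.
by rewrite -(subKn Hi) E' subKn.
Qed.

Lemma U_uniq w : uniq (U w).
Proof. exact/filter_uniq/sufs_uniq. Qed.

Lemma mem_sufs w s : (s \in sufs w) = suffix s w.
Proof.
apply/mapP/idP => [[i _ ->]|]; first exact: suffix_drop.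
rewrite suffixE => /eqP <-; exists (size w - size s) => //.
by rewrite mem_iota add0n ltnS leq_subr.
Qed.

Lemma mem_U w s : (s \in U w) = suffix s w && noX s.
Proof. by rewrite mem_filter mem_sufs andbC. Qed.

Lemma noX_rcons s a : noX s -> ~~ noX (rcons s a) -> rcons s a \in X.
Proof.
move=> Hs /negPn /hasP [y Hy Hp].
case: (prefix_rcons_inv Hp) => [H|<-] //.
by move/hasP: Hs => []; exists y.
Qed.

Lemma noX0 : noX [::].
Proof. by apply/hasP => [[y Hy]]; rewrite prefixs0 => /eqP E; apply: (Hne Hy). Qed.

Lemma U_rcons w a : size (U w) <= size (U (rcons w a)).
Proof.
pose f s := if noX (rcons s a) then rcons s a else [::].
have Hinj : {in U w &, injective f}.
  move=> s1 s2; rewrite !mem_U => /andP [S1 N1] /andP [S2 N2]; rewrite /f.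
  case: ifP => B1; case: ifP => B2.
  - exact: rcons_injl.
  - by case: (s1).
  - by case: (s2).
  - move=> _; have X1 := noX_rcons N1 (negbT B1); have X2 := noX_rcons N2 (negbT B2).
    case: (leqP (size s1) (size s2)) => Hl.
      apply: (@rcons_injl _ a); apply: sufX X1 X2 _ => //.
      by rewrite suffix_rcons eqxx (suffix_comp S1 S2 Hl).
    apply/esym/(@rcons_injl _ a); apply: sufX X2 X1 _ => //.
    by rewrite suffix_rcons eqxx (suffix_comp S2 S1 (ltnW Hl)).
rewrite -(size_map f) uniq_leq_size // ?map_inj_in_uniq ?U_uniq //.
move=> s /mapP [s' Hs' ->]; move: Hs'; rewrite !mem_U => /andP [S N]; rewrite /f.
case: ifP => B; first by rewrite B suffix_rcons eqxx S.
by rewrite suffix0s noX0.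
Qed.

Lemma U_cat w t : size (U w) <= size (U (w ++ t)).
Proof.
elim/last_ind: t => [|t a IH]; first by rewrite cats0.
by rewrite -rcons_cat; apply: leq_trans IH (U_rcons _ _).
Qed.

Lemma U_short s t : s \in U t -> size s < N X.
Proof.
rewrite mem_U => /andP [_ Hs]; rewrite ltnNge; apply/negP => H.
by move/negP: Hs; apply; apply: complete.
Qed.

Lemma U_shrink w t : N X <= size t -> size (U (w ++ t)) <= size (U t).
Proof.
move=> Ht; apply: uniq_leq_size; first exact: U_uniq.
move=> s Hs; have Hl := U_short Hs; move: Hs; rewrite !mem_U => /andP [S ->]; rewrite andbT.
by apply: suf_cat S; rewrite ltnW // (leq_trans Hl Ht).
Qed.

Lemma star_unique (ys1 ys2 : seq (seq A)) v1 v2 :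
  all (fun y => y \in X) ys1 -> all (fun y => y \in X) ys2 ->
  (forall s, suffix s v1 -> s \notin X) -> (forall s, suffix s v2 -> s \notin X) ->
  v1 ++ flatten ys1 = v2 ++ flatten ys2 -> v1 = v2.
Proof.
elim/last_ind: ys1 ys2 => [|ys1 y1 IH] ys2; case/lastP: ys2 => [|ys2 y2] //=;
  rewrite ?all_rcons ?flatten_rcons ?cats0.
- by move=> _ _ _ _ ->.
- move=> _ /andP [Hy2 _] H1 _ E; move: (H1 y2); rewrite Hy2 E.
  by rewrite catA suffix_suffix => /(_ isT).
- move=> /andP [Hy1 _] _ _ H2 E; move: (H2 y1); rewrite Hy1 -E.
  by rewrite catA suffix_suffix => /(_ isT).
move=> /andP [Hy1 A1] /andP [Hy2 A2] H1 H2; rewrite !catA => E.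
have Ey : y1 = y2.
  have S1 : suffix y1 (v1 ++ flatten ys1 ++ y1) by rewrite catA suffix_suffix.
  have S2 : suffix y2 (v1 ++ flatten ys1 ++ y1) by rewrite catA E suffix_suffix.
  case: (leqP (size y1) (size y2)) => Hl.
    exact: (sufX Hbif) Hy1 Hy2 (suffix_comp S1 S2 Hl).
  exact/esym/(sufX Hbif Hy2 Hy1 (suffix_comp S2 S1 (ltnW Hl))).
by apply: (IH ys2) => //; apply: (@catIs' _ _ _ y1); rewrite E Ey.
Qed.

Lemma parses_le w (P : seq (seq A * seq A * seq A)) :
  uniq P -> (forall t, t \in P -> is_parse X w t) -> size P <= size (U w).
Proof.
move=> HP Hpar; rewrite -(size_map (fun t => t.2)); apply: uniq_leq_size.
  rewrite map_inj_in_uniq // => [[[v1 z1] u1] [[v2 z2] u2]] T1 T2 /= Eu.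
  move: (Hpar _ T1) (Hpar _ T2) => [E1 V1 [ys1 [Y1 F1]] _] [E2 V2 [ys2 [Y2 F2]] _].
  subst u2; rewrite E1 !catA in E2; have E := catIs' E2.
  have Ev : v1 = v2 by apply: (star_unique Y1 Y2 V1 V2); rewrite F1 F2.
  by subst v2; rewrite (catsI' E).
move=> u /mapP [[[v z] u'] Ht ->] /=.
move: (Hpar _ Ht) => [E V _ Hu]; rewrite mem_U E catA suffix_suffix /=.
by apply/hasP => [[y Hy Hp]]; move: (Hu y Hp); rewrite Hy.
Qed.

End Deg.


Section Fac.
Variable A : finType.
Variable x : nat -> A.

Definition win i m := mkseq (fun k => x (i + k)) m.

Lemma size_win i m : size (win i m) = m.
Proof. exact: size_mkseq. Qed.

Lemma factorP w : factor x w <-> exists i, forall k, k < size w -> nth (x 0) w k = x (i + k).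
Proof.
split => [[i E]|[i H]]; exists i.
  by move=> k Hk; rewrite [in LHS]E nth_mkseq.
apply: (@eq_from_nth _ (x 0)); rewrite ?size_mkseq // => k Hk.
by rewrite nth_mkseq // H.
Qed.

Lemma fac_win i m : factor x (win i m).
Proof. by exists i; rewrite size_win. Qed.

Lemma fac_drop w k : factor x w -> factor x (drop k w).
Proof.
move=> /factorP [i H]; apply/factorP; exists (i + k) => j; rewrite size_drop => Hj.
by rewrite nth_drop H ?addnA // -ltn_subRL.
Qed.

Lemma fac_take w k : factor x w -> factor x (take k w).
Proof.
move=> /factorP [i H]; apply/factorP; exists i => j; rewrite size_take.
case: (ltnP k (size w)) => Hk Hj.
  by rewrite nth_take //; apply: H; exact: ltn_trans Hj Hk.
by rewrite take_oversize //; exact: H.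
Qed.

Lemma fac_prefix q w : prefix q w -> factor x w -> factor x q.
Proof. by rewrite prefixE => /eqP <-; apply: fac_take. Qed.

Definition isfac w := if excluded_middle_informative (factor x w) then true else false.

Lemma isfacP w : reflect (factor x w) (isfac w).
Proof. by rewrite /isfac; case: excluded_middle_informative => H; constructor. Qed.

Lemma winS k m : win k m.+1 = x k :: win k.+1 m.
Proof.
rewrite /win /mkseq /= addn0; congr cons.
have -> : iota 1 m = map (addn 1) (iota 0 m) by rewrite -iotaDl.
rewrite -map_comp; apply: eq_map => j /=.
by rewrite addnA addn1.
Qed.

Lemma winSr k m : win k m.+1 = rcons (win k m) (x (k + m)).
Proof. exact: mkseqS. Qed.

Lemma win_head a b m : 0 < m -> win a m = win b m -> x a = x b.
Proof. case: m => // m _. rewrite (winS a) (winS b). move=> [E _]. exact: E. Qed.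

Lemma periodic_of m : 0 < m -> (forall i j, win i m = win j m -> x (i + m) = x (j + m)) ->
  ultimately_periodic x.
Proof.
move=> Hm H.
pose M := size (wds A m).
pose s := map (fun k => win k m) (iota 0 M.+1).
have : ~~ uniq s.
  apply/negP => Hu; have := uniq_leq_size Hu.
  have Hsub : {subset s <= wds A m}.
    by move=> w /mapP [k _ ->]; rewrite mem_wds size_win.
  by move/(_ _ Hsub); rewrite size_map size_iota ltnn.
case/(uniqPn [::]) => i [j [Hij Hj]]; rewrite size_map size_iota in Hj.
rewrite !(nth_map 0) ?size_iota ?(ltn_trans Hij) // !nth_iota ?(ltn_trans Hij) // !add0n => E.
have Hs : forall l, win (i + l) m = win (j + l) m.
  elim=> [|l IH]; first by rewrite !addn0.
  have E2 : win (i + l) m.+1 = win (j + l) m.+1 by rewrite !winSr IH (H _ _ IH).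
  move/(congr1 behead): E2. rewrite (winS (i + l)) (winS (j + l)). simpl. rewrite (addnS i l) (addnS j l). exact.
exists (j - i); split; first by rewrite subn_gt0.
exists i => l Hl.
have E3 := win_head Hm (Hs (l - i)).
clear H Hs E s M Hj.
have E1 : i + (l - i) = l by rewrite subnKC.
have E2 : j + (l - i) = l + (j - i).
  by rewrite addnBA // addnC addnBA // ltnW.
by rewrite -E2 -E3 E1.
Qed.

End Fac.


Section Tree.
Variable A : finType.
Lemma sum_ge1 (F : A -> bool) a : F a -> 1 <= \sum_(b : A) (F b : nat).
Proof. move=> Ha. rewrite (bigD1 a); last by []. rewrite Ha. exact: leq_addr. Qed.
Lemma sum_ge2 (F : A -> bool) a b : a != b -> F a -> F b -> 2 <= \sum_(c : A) (F c : nat).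
Proof.
move=> Hab Ha Hb. rewrite (bigD1 a); last by []. rewrite Ha. rewrite (bigD1 b); last by rewrite eq_sym.
rewrite Hb. exact: (leq_add (leqnn 1) (leq_addr _ _)).
Qed.
Lemma prefix_split (p w : seq A) :
  (prefix p w : nat) = (w == p) + \sum_(a : A) (prefix (rcons p a) w : nat).
Proof.
case Hp: (prefix p w).
  case/prefixP: Hp => r ->; case: r => [|b r].
    rewrite cats0 eqxx big1; first by [].
    move=> a _.
    by apply/eqP; rewrite eqb0; apply/negP => /size_prefix; rewrite size_rcons ltnn.
  have -> : (p ++ b :: r == p) = false.
    by apply/negbTE/negP => /eqP /(congr1 size); rewrite size_cat /= -{2}[size p]addn0 => /addnI.
  rewrite add0n (bigD1 b); last by [].
  rewrite big1.
    rewrite -cats1 prefix_catr; last by [].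
    by rewrite eqxx /= eqxx prefix0s addn0.
  move=> a Hab; apply/eqP; rewrite eqb0 -cats1 prefix_catr; last by [].
  by rewrite eqxx /= (negbTE Hab).
have -> : (w == p) = false by apply/negbTE/negP => /eqP E; rewrite E prefix_refl in Hp.
rewrite big1; first by [].
move=> a _; apply/eqP; rewrite eqb0; apply/negP => H.
by rewrite (prefix_trans (prefix_rcons p a) H) in Hp.
Qed.


Lemma count_split (s : seq (seq A)) p :
  count (prefix p) s = count (pred1 p) s + \sum_(a : A) count (prefix (rcons p a)) s.
Proof.
rewrite !countE (eq_bigr _ (fun w _ => prefix_split p w)) big_split.
congr (_ + _); rewrite exchange_big; apply: eq_bigr => a _; by rewrite countE.
Qed.
End Tree.

Section Main.
Variable A : finType.
Variable x : nat -> A.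
Variable X : seq (seq A).
Hypothesis Hne : forall w, w \in X -> w <> [::].
Hypothesis Hbif : forall u v, u \in X -> v \in X -> u <> v -> ~~ prefix u v /\ ~~ suffix u v.
Hypothesis Hmax : forall Y : seq A -> Prop, bifix_code Y -> (forall w, w \in X -> Y w) -> forall w, Y w -> w \in X.

Variable R : seq (seq A).
Hypothesis HRu : uniq R.
Hypothesis HRn : forall q, q \in R -> noX X q.
Hypothesis HRf : forall q, q \in R -> isfac x q.
Hypothesis HRs : forall q, q \in R -> exists a b, [/\ a != b, isfac x (rcons q a) & isfac x (rcons q b)].

Definition W := [seq y <- undup X | isfac x y].

Lemma W_uniq : uniq W.
Proof. exact/filter_uniq/undup_uniq. Qed.

Lemma mem_W y : (y \in W) = isfac x y && (y \in X).
Proof. by rewrite mem_filter mem_undup. Qed.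

Lemma tree m : forall p, N X - size p <= m -> isfac x p ->
  (forall y, y \in X -> prefix y p -> y = p) ->
  (count (prefix p) R).+1 <= count (prefix p) W.
Proof.
elim: m => [|m IH] p Hm Hf Hpp; case Hp: (p \in X).
- have -> : count (prefix p) W = 1.
    rewrite (@eq_in_count _ _ (pred1 p)); first by rewrite count_uniq_mem ?W_uniq // mem_W Hf Hp.
    move=> y; rewrite mem_W => /andP [_ Hy] /=; apply/idP/eqP => [H|->]; last exact: prefix_refl.
    exact/esym/(prefX Hbif Hp Hy H).
  rewrite ltnS leqn0 -(count_pred0 R) ; apply/eqP/eq_in_count => q Hq /=.
  apply/negbTE/negP => H; move/negP: (HRn Hq); apply; apply/hasP; by exists p.
- have Hn : noX X p.
    apply/negP => /hasP [y Hy Hyp]. have E := Hpp y Hy Hyp. by rewrite E Hp in Hy.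
  have : N X <= size p by rewrite -subn_eq0 -leqn0.
  by move/(complete Hne Hbif Hmax); rewrite (negbTE Hn).
- have -> : count (prefix p) W = 1.
    rewrite (@eq_in_count _ _ (pred1 p)); first by rewrite count_uniq_mem ?W_uniq // mem_W Hf Hp.
    move=> y; rewrite mem_W => /andP [_ Hy] /=; apply/idP/eqP => [H|->]; last exact: prefix_refl.
    exact/esym/(prefX Hbif Hp Hy H).
  rewrite ltnS leqn0 -(count_pred0 R) ; apply/eqP/eq_in_count => q Hq /=.
  apply/negbTE/negP => H; move/negP: (HRn Hq); apply; apply/hasP; by exists p.
have Hn : noX X p.
  apply/negP => /hasP [y Hy Hyp]. have E := Hpp y Hy Hyp. by rewrite E Hp in Hy.
rewrite (count_split R p) (count_split W p).
have -> : count (pred1 p) W = 0.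
  apply/eqP; rewrite -leqn0 leqNgt -has_count; apply/hasPn => y; rewrite mem_W => /andP [_ Hy] /=.
  by apply/negP => /eqP E; move: Hy; rewrite E Hp.
rewrite count_uniq_mem // add0n.
have Hchild : forall a, (isfac x (rcons p a) : nat) + count (prefix (rcons p a)) R <= count (prefix (rcons p a)) W.
  move=> a; case Ha: (isfac x (rcons p a)).
    apply: IH => //.
      by rewrite size_rcons subnS; case: (N X - size p) Hm => [|k] // ; rewrite ltnS.
    move=> y Hy Hyp; case: (prefix_rcons_inv Hyp) => // Hyp'.
    by move/negP: Hn; case; apply/hasP; exists y.
  have -> : count (prefix (rcons p a)) R = 0.
    rewrite -(count_pred0 R); apply: eq_in_count => q Hq /=.
    apply/negP => H.
    have : isfac x (rcons p a).
      apply/isfacP; exact: (fac_prefix H (elimT (isfacP x q) (HRf Hq))).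
    by rewrite Ha.
  by [].
have Hsum : \sum_(a : A) ((isfac x (rcons p a) : nat) + count (prefix (rcons p a)) R) <=
   \sum_(a : A) count (prefix (rcons p a)) W by apply: leq_sum => a _; exact: Hchild.
rewrite big_split in Hsum.
apply: leq_trans Hsum; rewrite ltn_add2r.
case/isfacP: Hf => i Ei.
have Hf1 : isfac x (rcons p (x (i + size p))).
  have -> : rcons p (x (i + size p)) = win x i (size p).+1 by rewrite winSr /win -Ei.
  by apply/isfacP; exact: fac_win.
case HpR: (p \in R) => /=.
  have [a [b [Hab Ha Hb]]] := HRs HpR.
  exact: sum_ge2 Hab Ha Hb.
exact: sum_ge1 Hf1.
Qed.

End Main.

End Helpers.
Import Helpers.

Theorem mainTheorem14 (A : finType) (x : nat -> A) :
  (exists (X : seq (seq A)) (d : nat),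
     [/\ maximal_bifix_code X, has_degree X d & card_factors_le X x d]) ->
  ultimately_periodic x.
Proof.
case=> X [d [[[Hne Hbif] Hmax] [_ [w0 [P [HPu HPp HPs]]]] Hcard]].
have Hd : d <= size (U X w0) by rewrite -HPs; exact: (parses_le Hbif).
case: (classic (ultimately_periodic x)) => // Hnp.
have [i [j [Ew Hx]]] : exists i j, win x i (N X) = win x j (N X) /\ x (i + N X) <> x (j + N X).
  apply: NNPP => Hn; apply: Hnp; apply: (@periodic_of _ x (N X)) => // i j E.
  apply: NNPP => Hne'; apply: Hn; by exists i, j.
pose t := win x i (N X).
pose R := U X t.
have Hst : size t = N X by rewrite size_win.
have HsR : d <= size R.
  apply: leq_trans Hd (leq_trans (U_cat Hne Hbif w0 t) _).
  by apply: (U_shrink Hne Hbif Hmax); rewrite Hst.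
have HRu : uniq R by exact: U_uniq.
have HRn : forall q, q \in R -> noX X q by move=> q; rewrite mem_U => /andP [].
have Hdrop : forall q, q \in R -> q = drop (size t - size q) t.
  by move=> q; rewrite mem_U => /andP [S _]; move: S; rewrite suffixE => /eqP.
have HRf : forall q, q \in R -> isfac x q.
  move=> q Hq; apply/isfacP; rewrite (Hdrop q Hq); apply: fac_drop; exact: fac_win.
have HRs : forall q, q \in R -> exists a b, [/\ a != b, isfac x (rcons q a) & isfac x (rcons q b)].
  move=> q Hq; exists (x (i + N X)), (x (j + N X)); split.
  - by apply/eqP.
  - apply/isfacP; rewrite (Hdrop q Hq) -drop_rcons ?leq_subr //.
    by apply: fac_drop; rewrite /t -winSr; exact: fac_win.
  - apply/isfacP; rewrite (Hdrop q Hq) -drop_rcons ?leq_subr //.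
    by apply: fac_drop; rewrite /t Ew -winSr; exact: fac_win.
have Hroot := tree Hne Hbif Hmax HRu HRn HRf HRs (m := N X) (p := [::]).
have HW : size (W x X) <= d.
  apply: Hcard; first exact: W_uniq.
  by move=> w; rewrite mem_W => /andP [/isfacP Hf Hw].
have Hpp : forall y, y \in X -> prefix y [::] -> y = [::].
  by move=> y _; rewrite prefixs0 => /eqP.
have Hf0 : isfac x [::] by apply/isfacP; exists 0.
have := Hroot (leq_subr _ _) Hf0 Hpp.
rewrite !(eq_count (a2 := predT)) ?count_predT; last by move=> w; rewrite prefix0s.
  move=> H; have := leq_trans H (leq_trans HW HsR); by rewrite ltnn.
by move=> w; rewrite prefix0s.
Qed.
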